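(* Assume $p\ge2$, $q\ge2$, $p+q$ even, $m\in\mathbb N$ and $m+3\le\frac{p+q}2$. Let $\hat\Xi=\pi(\gamma_2(\Xi))$. Then for every $K$-homogeneous $f\in M^{+}(m)$ or $f\in M^{-}(m)$ with $K$-type $(\kappa_+,\kappa_-)$ one has $\hat\Xi f=\lambda f$ with $$\lambda=(\kappa_+-\kappa_-)(\kappa_++\kappa_--2)-\frac{p-q}{p+q}\,m(m+2).$$ In particular $\lambda=0$ if $m=0$.
   Context: Let $n=p+q$, $I_{p,q}=\mathrm{diag}(1_p,-1_q)$, $\mathfrak g=\{X\in\mathfrak{gl}_n(\mathbb C):{}^tXI_{p,q}+I_{p,q}X=0\}$, $\mathfrak o_n=\{X:{}^tX+X=0\}$, $[p]=\{1,\dots,p\}$, $p+[q]=\{p+1,\dots,n\}$, $\epsilon_i=1$ for $i\in[p]$ and $-1$ otherwise, $X_{i,j}=\epsilon_jE_{i,j}-\epsilon_iE_{j,i}$, $M_{i,j}=E_{i,j}-E_{j,i}$. $\Phi:\mathfrak g\to\mathfrak o_n$, $X\mapsto I_{p,q}^{1/2}XI_{p,q}^{-1/2}$ with $I_{p,q}^{1/2}=\mathrm{diag}(1,\dots,1,\sqrt{-1},\dots,\sqrt{-1})$, extended to tensors. $S^2$ is identified with symmetric 2-tensors and $\gamma_2:S^2(\mathfrak g)\to U(\mathfrak g)$ is the restriction of $a\otimes b\mapsto ab$. With $Q^\natural=\sum_{i,k}M_{i,k}\otimes M_{k,i}$ and $S^\natural_{ij}=\frac12\sum_k(M_{i,k}\otimes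 M_{k,j}+M_{k,j}\otimes M_{i,k})-\frac1n\delta_{ij}Q^\natural$, set $\Xi=\Phi^{-1}\big(\frac12(\sum_{i\in[p]}S^\natural_{ii}-\sum_{i\in p+[q]}S^\natural_{ii})\big)$. $K=\mathrm O(p)\times\mathrm O(q)$. On $V=\mathbb R^{p+q}$ with coordinates $(x_1,\dots,x_p,y_1,\dots,y_q)$ let $\mathcal H^k(\mathbb R^p)$, $\mathcal H^l(\mathbb R^q)$ be homogeneous harmonic polynomials of degrees $k,l$, $r_x^2=\sum x_i^2$, $r_y^2=\sum y_j^2$, and $\mathcal E=\bigoplus_{k,l\ge0}\mathcal H^k(\mathbb R^p)\otimes\mathcal H^l(\mathbb R^q)\otimes\mathbb C[[r_x^2,r_y^2]]$. The representation $\pi$ of $U(\mathfrak g)$ on $\mathcal E$ is given (with $i'=i-p$) by $\pi(X_{i,j})=x_i\partial_{x_j}-x_j\partial_{x_i}$ ($i,j\in[p]$), $-y_{i'}\partial_{y_{j'}}+y_{j'}\partial_{y_{i'}}$ ($i,j\in p+[q]$), $-\sqrt{-1}(x_iy_{j'}+\partial_{x_i}\partial_{y_{j'}})$ ($i\in[p],j\in p+[q]$), $\sqrt{-1}(x_jy_{i'}+\partial_{x_j}\partial_{y_{i'}})$ ($i\in p+[q],j\in[p]$). With $E_x=\sum x_i\partial_{x_i}$, $E_y=\sum y_j\partial_{y_j}$, $\Delta_x=\sum\partial_{x_i}^2$, $\Delta_y=\sum\partial_{y_j}^2$: $H=-E_x-\frac p2+E_y+\frac q2$, $X^+=-\frac12(\Delta_x+r_y^2)$,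 $X^-=\frac12(r_x^2+\Delta_y)$, $M^+(m)=\{f\in\mathcal E:Hf=mf,X^+f=0,(X^-)^{m+1}f=0\}$, $M^-(m)=\{f\in\mathcal E:Hf=-mf,X^-f=0,(X^+)^{m+1}f=0\}$. An element $h_1(x)h_2(y)\phi(r_x^2,r_y^2)$ with $h_1\in\mathcal H^k(\mathbb R^p)$, $h_2\in\mathcal H^l(\mathbb R^q)$ has $K$-type $(k+\frac p2,l+\frac q2)$; an element is $K$-homogeneous with $K$-type $(\kappa_+,\kappa_-)$ if it is a linear combination of such elements all of $K$-type $(\kappa_+,\kappa_-)$. *)

(* Defs.v *)
From HB Require Import structures.
From mathcomp Require Import all_boot all_order all_algebra.
Import Order.TTheory GRing.Theory Num.Theory.
Local Open Scope ring_scope.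

Section Defs.
Variable C : numClosedFieldType.
Variables p q : nat.
Local Notation n := (p + q)%N.

(* multi-indices (exponent vectors) and formal power series C[[x,y]];
   variable i < p is x_{i+1}, variable p + j is y_{j+1}. *)
Definition mono := 'I_n -> nat.
Definition ps := mono -> C.

Definition ps0 : ps := fun _ => 0.
Definition ps1 : ps := fun m => if [forall i, m i == 0%N] then 1 else 0.
Definition psscale (c : C) (f : ps) : ps := fun m => c * f m.

Definition mulx (i : 'I_n) (f : ps) : ps := fun m =>
  if (0 < m i)%N then f (fun j => if j == i then (m j).-1 else m j) else 0.
Definition dx (i : 'I_n) (f : ps) : ps := fun m =>
  (m i).+1%:R * f (fun j => if j == i then (m j).+1 else m j).

(* Cauchy product of formal power series (finite sum over k <= m) *)
Definition psmul (f g : ps) : ps := fun m =>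
  \sum_(k : {ffun 'I_n -> 'I_((\sum_(i < n) m i)%N).+1} | [forall i, (k i <= m i)%N])
     f (fun i => nat_of_ord (k i)) * g (fun i => (m i - k i)%N).

Definition eps (i : 'I_n) : C := if (i < p)%N then 1 else -1.

Definition rx2 : ps := fun m => \sum_(i < n | (i < p)%N) mulx i (mulx i ps1) m.
Definition ry2 : ps := fun m => \sum_(i < n | (p <= i)%N) mulx i (mulx i ps1) m.
Definition Ex (f : ps) : ps := fun m => \sum_(i < n | (i < p)%N) mulx i (dx i f) m.
Definition Ey (f : ps) : ps := fun m => \sum_(i < n | (p <= i)%N) mulx i (dx i f) m.
Definition Lapx (f : ps) : ps := fun m => \sum_(i < n | (i < p)%N) dx i (dx i f) m.
Definition Lapy (f : ps) : ps := fun m => \sum_(i < n | (p <= i)%N) dx i (dx i f) m.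

Definition Hop (f : ps) : ps := fun m =>
  - Ex f m - (p%:R / 2) * f m + Ey f m + (q%:R / 2) * f m.
Definition Xplus (f : ps) : ps := fun m => - (1 / 2) * (Lapx f m + psmul ry2 f m).
Definition Xminus (f : ps) : ps := fun m => (1 / 2) * (psmul rx2 f m + Lapy f m).

Definition harm_x (k : nat) (h : ps) : Prop :=
  (forall m : mono, h m != 0 ->
     (forall i : 'I_n, (p <= i)%N -> m i = 0%N) /\ (\sum_(i < n) m i)%N = k)
  /\ Lapx h = ps0.
Definition harm_y (l : nat) (h : ps) : Prop :=
  (forall m : mono, h m != 0 ->
     (forall i : 'I_n, (i < p)%N -> m i = 0%N) /\ (\sum_(i < n) m i)%N = l)
  /\ Lapy h = ps0.

(* phi(r_x^2, r_y^2) for phi in C[[s,t]] (coefficients phi a b);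
   only a, b <= |m| can contribute to the coefficient of x^m *)
Definition rser (phi : nat -> nat -> C) : ps := fun m =>
  \sum_(a < (\sum_(i < n) m i)%N.+1) \sum_(b < (\sum_(i < n) m i)%N.+1)
     phi a b * psmul (iter a (psmul rx2) ps1) (iter b (psmul ry2) ps1) m.

(* h1(x) h2(y) phi(r_x^2, r_y^2), of K-type (k + p/2, l + q/2) *)
Definition Kelt (k l : nat) (f : ps) : Prop :=
  exists h1 h2 phi, harm_x k h1 /\ harm_y l h2 /\ f = psmul h1 (psmul h2 (rser phi)).

Definition inE (f : ps) : Prop :=
  exists (N : nat) (c : 'I_N -> C) (k l : 'I_N -> nat) (F : 'I_N -> ps),
    (forall t, Kelt (k t) (l t) (F t)) /\ f = (fun m => \sum_(t < N) c t * F t m).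

Definition Khom (kp km : C) (f : ps) : Prop :=
  exists (N : nat) (c : 'I_N -> C) (F : 'I_N -> ps) (k l : nat),
    kp = k%:R + p%:R / 2 /\ km = l%:R + q%:R / 2 /\
    (forall t, Kelt k l (F t)) /\ f = (fun m => \sum_(t < N) c t * F t m).

Definition Mplus (mm : nat) (f : ps) : Prop :=
  inE f /\ Hop f = psscale mm%:R f /\ Xplus f = ps0 /\ iter mm.+1 Xminus f = ps0.
Definition Mminus (mm : nat) (f : ps) : Prop :=
  inE f /\ Hop f = psscale (- mm%:R) f /\ Xminus f = ps0 /\ iter mm.+1 Xplus f = ps0.

Definition piX (i j : 'I_n) (f : ps) : ps :=
  if (i < p)%N && (j < p)%N then fun m => mulx i (dx j f) m - mulx j (dx i f) m
  else if (p <= i)%N && (p <= j)%N then fun m => - mulx i (dx j f) m + mulx j (dx i f) m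
  else if (i < p)%N then fun m => - 'i * (mulx i (mulx j f) m + dx i (dx j f) m)
  else fun m => 'i * (mulx j (mulx i f) m + dx j (dx i f) m).

(* pi on g, by linearity: X = sum_{i<j} eps_j X_{ij} X_{i,j} for X in g *)
Definition piM (X : 'M[C]_n) (f : ps) : ps := fun m =>
  \sum_(i < n) \sum_(j < n | (i < j)%N) eps j * X i j * piX i j f m.

(* Phi^{-1}(M) = I_{p,q}^{-1/2} M I_{p,q}^{1/2} *)
Definition dd (i : 'I_n) : C := if (i < p)%N then 1 else 'i.
Definition phiinv (M : 'M[C]_n) : 'M[C]_n := \matrix_(i, j) ((dd i)^-1 * M i j * dd j).
Definition Mmx (a b : 'I_n) : 'M[C]_n := delta_mx a b - delta_mx b a.
Definition PM (a b : 'I_n) : ps -> ps := piM (phiinv (Mmx a b)).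

Definition Xihat (f : ps) : ps := fun m =>
  (1 / 2) * \sum_(i < n) eps i *
    ((1 / 2) * \sum_(k < n) (PM i k (PM k i f) m + PM k i (PM i k f) m)
     - n%:R^-1 * \sum_(a < n) \sum_(b < n) PM a b (PM b a f) m).

End Defs.

(* Main.v *)
Require Import Defs.
From HB Require Import structures.
From mathcomp Require Import all_boot all_order all_algebra.
From Stdlib Require Import FunctionalExtensionality.
From mathcomp Require Import boolp ring.
Import Order.TTheory GRing.Theory Num.Theory.
Local Open Scope ring_scope.
Set Implicit Arguments. Unset Strict Implicit. Unset Printing Implicit Defensive.

Section PsStruct.
Variable C : numClosedFieldType.
Variables p q : nat.
Definition ps_add (f g : ps C p q) : ps C p q := fun m => f m + g m.
Definition ps_opp (f : ps C p q) : ps C p q := fun m => - f m.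
Lemma ps_addA : associative ps_add.
Proof. by move=> f g h; apply: functional_extensionality => m; rewrite /ps_add addrA. Qed.
Lemma ps_addC : commutative ps_add.
Proof. by move=> f g; apply: functional_extensionality => m; rewrite /ps_add addrC. Qed.
Lemma ps_add0 : left_id (ps0 C p q) ps_add.
Proof. by move=> f; apply: functional_extensionality => m; rewrite /ps_add /ps0 add0r. Qed.
Lemma ps_addN : left_inverse (ps0 C p q) ps_opp ps_add.
Proof. by move=> f; apply: functional_extensionality => m; rewrite /ps_add /ps_opp /ps0 addNr. Qed.
End PsStruct.

HB.instance Definition _ (C : numClosedFieldType) p q := gen_eqMixin (ps C p q).
HB.instance Definition _ (C : numClosedFieldType) p q := gen_choiceMixin (ps C p q).
HB.instance Definition _ (C : numClosedFieldType) p q :=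
  GRing.isZmodule.Build (ps C p q) (@ps_addA C p q) (@ps_addC C p q) (@ps_add0 C p q) (@ps_addN C p q).

Section PsLmod.
Variable C : numClosedFieldType.
Variables p q : nat.
Lemma ps_scaleA (a b : C) (f : ps C p q) : psscale C p q a (psscale C p q b f) = psscale C p q (a * b) f.
Proof. by apply: functional_extensionality => m; rewrite /psscale mulrA. Qed.
Lemma ps_scale1 : left_id 1 (psscale C p q).
Proof. by move=> f; apply: functional_extensionality => m; rewrite /psscale mul1r. Qed.
Lemma ps_scaleDr : right_distributive (psscale C p q) +%R.
Proof. by move=> a f g; apply: functional_extensionality => m; rewrite /psscale /= /ps_add mulrDr. Qed.
Lemma ps_scaleDl (f : ps C p q) : {morph psscale C p q ^~ f : a b / a + b}.
Proof. by move=> a b; apply: functional_extensionality => m; rewrite /psscale /= /ps_add mulrDl. Qed.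
End PsLmod.
HB.instance Definition _ (C : numClosedFieldType) p q :=
  GRing.Zmodule_isLmodule.Build C (ps C p q) (@ps_scaleA C p q) (@ps_scale1 C p q) (@ps_scaleDr C p q) (@ps_scaleDl C p q).

Section Basics.
Variable C : numClosedFieldType.
Variables p q : nat.
Local Notation n := (p + q)%N.
Local Notation ps := (ps C p q).
Local Notation mono := (mono p q).
Local Notation mulx := (mulx C p q).
Local Notation dx := (dx C p q).

Definition inc (i : 'I_n) (m : mono) : mono := fun j => if j == i then (m j).+1 else m j.
Definition dec (i : 'I_n) (m : mono) : mono := fun j => if j == i then (m j).-1 else m j.

Lemma mulxE i f m : mulx i f m = if (0 < m i)%N then f (dec i m) else 0.
Proof. by []. Qed.
Lemma dxE i f m : dx i f m = (m i).+1%:R * f (inc i m).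
Proof. by []. Qed.
Lemma psaddE (f g : ps) m : (f + g) m = f m + g m. Proof. by []. Qed.
Lemma psoppE (f : ps) m : (- f) m = - f m. Proof. by []. Qed.
Lemma pssubE (f g : ps) m : (f - g) m = f m - g m. Proof. by []. Qed.
Lemma psscaleE (c : C) (f : ps) m : (c *: f) m = c * f m. Proof. by []. Qed.
Lemma ps0E m : (0 : ps) m = 0. Proof. by []. Qed.
Lemma pssumE (I : Type) (r : seq I) (P : pred I) (F : I -> ps) m :
  (\sum_(i <- r | P i) F i) m = \sum_(i <- r | P i) F i m.
Proof.
elim: r => [|a r IH]; first by rewrite !big_nil.
by rewrite !big_cons; case: (P a); rewrite ?psaddE IH.
Qed.
Lemma psscale_def c (f : ps) : psscale C p q c f = c *: f. Proof. by []. Qed.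
Lemma ps0_def : ps0 C p q = 0. Proof. by []. Qed.

Lemma psext (f g : ps) : (forall m, f m = g m) -> f = g.
Proof. exact: functional_extensionality. Qed.
Lemma monoext (m1 m2 : mono) : (forall j, m1 j = m2 j) -> m1 = m2.
Proof. exact: functional_extensionality. Qed.

Lemma mulx_linear i : linear (mulx i).
Proof.
move=> a f g; apply: psext => m; rewrite psaddE psscaleE !mulxE psaddE psscaleE.
by case: ifP; rewrite ?mulr0 ?addr0.
Qed.
HB.instance Definition _ i := GRing.isLinear.Build C ps ps _ (mulx i) (mulx_linear i).
Lemma dx_linear i : linear (dx i).
Proof.
move=> a f g; apply: psext => m; rewrite psaddE psscaleE !dxE psaddE psscaleE.
by rewrite mulrDr mulrCA.
Qed.
HB.instance Definition _ i := GRing.isLinear.Build C ps ps _ (dx i) (dx_linear i).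

Lemma inc_self i m : inc i m i = (m i).+1. Proof. by rewrite /inc eqxx. Qed.
Lemma dec_self i m : dec i m i = (m i).-1. Proof. by rewrite /dec eqxx. Qed.
Lemma inc_other i j m : j != i -> inc i m j = m j. Proof. by rewrite /inc => /negPf ->. Qed.
Lemma dec_other i j m : j != i -> dec i m j = m j. Proof. by rewrite /dec => /negPf ->. Qed.
Lemma dec_inc i m : dec i (inc i m) = m.
Proof. apply: monoext => j; rewrite /dec /inc; by case: eqP. Qed.
Lemma inc_dec i m : (0 < m i)%N -> inc i (dec i m) = m.
Proof. move=> h; apply: monoext => j; rewrite /dec /inc; case: eqP => // ->; by rewrite prednK. Qed.
Lemma inc_inc i j m : inc i (inc j m) = inc j (inc i m).
Proof. apply: monoext => k; rewrite /inc; do 2 case: eqP => //. Qed.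
Lemma dec_dec i j m : dec i (dec j m) = dec j (dec i m).
Proof. apply: monoext => k; rewrite /dec; do 2 case: eqP => //. Qed.
Lemma inc_dec_comm i j m : i != j -> inc i (dec j m) = dec j (inc i m).
Proof.
move=> ij; apply: monoext => k; rewrite /dec /inc.
case: (eqVneq k i) => [->|ki]; first by rewrite (negPf ij).
by case: eqP.
Qed.

Lemma dx_mulx i j f : dx i (mulx j f) = mulx j (dx i f) + (i == j)%:R *: f.
Proof.
apply: psext => m; rewrite psaddE psscaleE !dxE !mulxE.
case: (eqVneq i j) => [<-|ij].
  rewrite inc_self /= dec_inc mul1r; case: (posnP (m i)) => [->|h]; first by rewrite /= add0r mulr1n mul1r.
  by rewrite dxE dec_self inc_dec // prednK // mulrSr mulrDl mul1r.

rewrite inc_other 1?eq_sym // mul0r addr0; case: ifP => _; last by rewrite mulr0.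
by rewrite dxE dec_other // inc_dec_comm.
Qed.

Lemma mulx_mulx i j f : mulx i (mulx j f) = mulx j (mulx i f).
Proof.
case: (eqVneq i j) => [->//|ij].
apply: psext => m; rewrite !mulxE dec_other 1?eq_sym // dec_other //.
by do 2 case: ifP => //; rewrite dec_dec.
Qed.

Lemma dx_dx i j f : dx i (dx j f) = dx j (dx i f).
Proof.
case: (eqVneq i j) => [->//|ij].
apply: psext => m; rewrite !dxE inc_other 1?eq_sym // inc_other // inc_inc.
by rewrite mulrCA.
Qed.

Lemma mulx_dx_diag i f : mulx i (dx i f) = fun m => (m i)%:R * f m.
Proof.
apply: psext => m; rewrite mulxE; case: (posnP (m i)) => [->|h]; first by rewrite mul0r.
by rewrite dxE dec_self prednK // inc_dec.
Qed.

End Basics.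

Section Lin.
Variable C : numClosedFieldType.
Variables p q : nat.
Local Notation ps := (ps C p q).
Local Notation mulx := (mulx C p q).
Local Notation dx := (dx C p q).
Lemma mulxD i (f g : ps) : mulx i (f + g) = mulx i f + mulx i g. Proof. exact: linearD. Qed.
Lemma mulxB i (f g : ps) : mulx i (f - g) = mulx i f - mulx i g. Proof. exact: linearB. Qed.
Lemma mulxN i (f : ps) : mulx i (- f) = - mulx i f. Proof. exact: linearN. Qed.
Lemma mulxZ i c (f : ps) : mulx i (c *: f) = c *: mulx i f. Proof. exact: linearZ. Qed.
Lemma mulx0 i : mulx i 0 = 0. Proof. exact: linear0. Qed.
Lemma mulx_sum i (I : Type) (r : seq I) (P : pred I) (F : I -> ps) :
  mulx i (\sum_(k <- r | P k) F k) = \sum_(k <- r | P k) mulx i (F k).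
Proof. exact: linear_sum. Qed.
Lemma dxD i (f g : ps) : dx i (f + g) = dx i f + dx i g. Proof. exact: linearD. Qed.
Lemma dxB i (f g : ps) : dx i (f - g) = dx i f - dx i g. Proof. exact: linearB. Qed.
Lemma dxN i (f : ps) : dx i (- f) = - dx i f. Proof. exact: linearN. Qed.
Lemma dxZ i c (f : ps) : dx i (c *: f) = c *: dx i f. Proof. exact: linearZ. Qed.
Lemma dx0 i : dx i 0 = 0. Proof. exact: linear0. Qed.
Lemma dx_sum i (I : Type) (r : seq I) (P : pred I) (F : I -> ps) :
  dx i (\sum_(k <- r | P k) F k) = \sum_(k <- r | P k) dx i (F k).
Proof. exact: linear_sum. Qed.
End Lin.

Ltac psring := apply: psext => ?; rewrite ?(psaddE, psoppE, pssubE, psscaleE, ps0E, pssumE) /=; ring.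



Section Weyl.
Variable C : numClosedFieldType.
Variables p q : nat.
Local Notation n := (p + q)%N.
Local Notation ps := (ps C p q).
Local Notation mono := (mono p q).
Local Notation mulx := (mulx C p q).
Local Notation dx := (dx C p q).

Lemma pair1 i j (g : ps) : dx i (dx i (mulx j (mulx j g))) =
  mulx j (mulx j (dx i (dx i g))) + (i == j)%:R *: (4%:R *: mulx i (dx i g) + 2%:R *: g).
Proof.
case: (eqVneq i j) => [<-|ij].
  rewrite !(dx_mulx, dxD, dxZ, mulxD, mulxZ) /= eqxx. psring.
rewrite !(dx_mulx, dxD, dxZ, mulxD, mulxZ) /= (negPf ij). psring.
Qed.


Lemma collapse (P : pred 'I_n) i (X : ps) : P i ->
  \sum_(j | P j) (i == j)%:R *: X = X.
Proof.
move=> Pi; rewrite (bigD1 i) //= eqxx scale1r big1 ?addr0 // => j /andP[_ ji].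
by rewrite eq_sym (negPf ji) scale0r.
Qed.

Definition R2 (P : pred 'I_n) (g : ps) : ps := \sum_(i | P i) mulx i (mulx i g).
Definition Lap (P : pred 'I_n) (g : ps) : ps := \sum_(i | P i) dx i (dx i g).
Definition sP (P : pred 'I_n) (m : mono) : nat := (\sum_(i | P i) m i)%N.
Definition Eop (P : pred 'I_n) (g : ps) : ps := fun m => (sP P m)%:R * g m.

Lemma R2D P f g : R2 P (f + g) = R2 P f + R2 P g.
Proof. by rewrite /R2 -big_split /=; apply: eq_bigr => i _; rewrite !mulxD. Qed.
Lemma R2Z P c f : R2 P (c *: f) = c *: R2 P f.
Proof. by rewrite /R2 scaler_sumr; apply: eq_bigr => i _; rewrite !mulxZ. Qed.
Lemma LapD P f g : Lap P (f + g) = Lap P f + Lap P g.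
Proof. by rewrite /Lap -big_split /=; apply: eq_bigr => i _; rewrite !dxD. Qed.
Lemma LapZ P c f : Lap P (c *: f) = c *: Lap P f.
Proof. by rewrite /Lap scaler_sumr; apply: eq_bigr => i _; rewrite !dxZ. Qed.

Lemma Eop_sum P g : \sum_(i | P i) mulx i (dx i g) = Eop P g.
Proof.
apply: psext => m; rewrite pssumE /Eop /sP natr_sum mulr_suml.
by apply: eq_bigr => i _; rewrite mulx_dx_diag.
Qed.

Lemma card_sum1 (P : pred 'I_n) : \sum_(i | P i) (1 : C) = #|P|%:R.
Proof. by rewrite sumr_const. Qed.

Lemma LapR2 P g : Lap P (R2 P g) = R2 P (Lap P g) + 4%:R *: Eop P g + (2 * #|P|)%:R *: g.
Proof.
rewrite /Lap /R2.
under eq_bigr => i _ do rewrite !dx_sum.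
under eq_bigr => i _ do under eq_bigr => j _ do rewrite pair1.
rewrite (eq_bigr (fun i => \sum_(j | P j) mulx j (mulx j (dx i (dx i g))) +
     \sum_(j | P j) (i == j)%:R *: (4%:R *: mulx i (dx i g) + 2%:R *: g))); last first.
  by move=> i _; rewrite big_split.
rewrite big_split /= exchange_big /=.
rewrite (eq_bigr (fun j => mulx j (mulx j (\sum_(i | P i) dx i (dx i g))))); last first.
  by move=> j _; rewrite !mulx_sum.
rewrite -addrA; congr (_ + _).
rewrite (eq_bigr (fun i => 4%:R *: mulx i (dx i g) + 2%:R *: g)); last first.
  by move=> i Pi; rewrite collapse.
rewrite big_split /= -scaler_sumr Eop_sum; congr (_ + _).
by rewrite sumr_const natrM -scaler_nat scalerA mulr_natl mulr_natr.
Qed.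


Lemma LapR2_cross (P Q : pred 'I_n) g : (forall i, P i -> Q i -> False) ->
  Lap P (R2 Q g) = R2 Q (Lap P g).
Proof.
move=> PQ; rewrite /Lap /R2.
under eq_bigr => i _ do rewrite !dx_sum.
under eq_bigr => i Pi do under eq_bigr => j Qj do rewrite pair1.
rewrite exchange_big /=; apply: eq_bigr => j Qj; rewrite !mulx_sum; apply: eq_bigr => i Pi.
case: (eqVneq i j) => [ij|]; last by rewrite scale0r addr0.
by subst; case: (PQ _ Pi Qj).
Qed.

Lemma Lap_comm P Q g : Lap P (Lap Q g) = Lap Q (Lap P g).
Proof.
rewrite /Lap; under eq_bigr => i _ do rewrite !dx_sum.
rewrite exchange_big /=; apply: eq_bigr => j _; rewrite !dx_sum; apply: eq_bigr => i _.
by rewrite !(dx_dx i j).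
Qed.

Lemma R2_comm P Q g : R2 P (R2 Q g) = R2 Q (R2 P g).
Proof.
rewrite /R2; under eq_bigr => i _ do rewrite !mulx_sum.
rewrite exchange_big /=; apply: eq_bigr => j _; rewrite !mulx_sum; apply: eq_bigr => i _.
by rewrite !(mulx_mulx i j).
Qed.

Lemma collapseC (P : pred 'I_n) i (x : C) : P i ->
  \sum_(j | P j) (i == j)%:R * x = x.
Proof.
move=> Pi; rewrite (bigD1 i) //= eqxx mul1r big1 ?addr0 // => j /andP[_ ji].
by rewrite eq_sym (negPf ji) mul0r.
Qed.

Definition Lop (a b : 'I_n) (g : ps) : ps := mulx a (dx b g) - mulx b (dx a g).

Lemma diag2 a b g : mulx a (mulx b (dx a (dx b g))) =
  fun m => (m a)%:R * ((m b)%:R - (a == b)%:R) * g m.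
Proof.
rewrite (dx_dx a b) mulx_dx_diag; apply: psext => m; rewrite mulxE.
case: (posnP (m a)) => [->|h]; first by rewrite !mul0r.
rewrite dxE dec_self prednK // inc_dec //.
case: (eqVneq b a) => [->|ba].
  by rewrite dec_self /= -subn1 natrB // mulrCA mulrA.
by rewrite dec_other // /= subr0 mulrCA mulrA.
Qed.

Lemma pairL a b g : Lop a b (Lop a b g) =
  mulx a (mulx a (dx b (dx b g))) + mulx b (mulx b (dx a (dx a g)))
  - 2%:R *: mulx a (mulx b (dx a (dx b g)))
  + (2 * (a == b))%:R *: mulx a (dx a g) - mulx a (dx a g) - mulx b (dx b g).
Proof.
rewrite /Lop; case: (eqVneq a b) => [<-|ab].
  rewrite subrr /=. psring.
rewrite !(dx_mulx, dxD, dxB, dxN, dxZ, mulxD, mulxB, mulxN, mulxZ) /= !eqxx (eq_sym b a) (negPf ab) /=.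
rewrite (mulx_mulx b a) (dx_dx b a). psring.
Qed.


Lemma lin3 (P : pred 'I_n) a (F : 'I_n -> C) (c1 c2 c3 : C) : P a ->
  \sum_(b | P b) (c1 * F b + c2 * (a == b)%:R + c3) =
  c1 * \sum_(b | P b) F b + c2 + c3 * #|P|%:R.
Proof.
move=> Pa; rewrite !big_split /= -mulr_sumr sumr_const.
congr (_ + _ + _); last by rewrite mulr_natr.
rewrite (bigD1 a) //= eqxx mulr1 big1 ?addr0 // => b /andP[_ ba].
by rewrite eq_sym (negPf ba) mulr0.
Qed.

Lemma lin2 (P : pred 'I_n) (F : 'I_n -> C) (d1 d2 : C) :
  \sum_(a | P a) (d1 * F a + d2) = d1 * \sum_(a | P a) F a + d2 * #|P|%:R.
Proof. by rewrite big_split /= -mulr_sumr sumr_const mulr_natr. Qed.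

Definition Lsq (P : pred 'I_n) (g : ps) : ps :=
  \sum_(a | P a) \sum_(b | P b) Lop a b (Lop a b g).

Lemma LsqE P g m : Lsq P g m = 2%:R * R2 P (Lap P g) m
   - 2%:R * ((sP P m)%:R ^+ 2 + (#|P|%:R - 2%:R) * (sP P m)%:R) * g m.
Proof.
rewrite /Lsq pssumE.
under eq_bigr => a _ do rewrite pssumE.
under eq_bigr => a _ do under eq_bigr => b _ do
  rewrite pairL !(psaddE, pssubE, psscaleE) diag2 !mulx_dx_diag !(psoppE, psscaleE) /=.
pose F (a : 'I_n) : C := (m a)%:R.
rewrite (eq_bigr (fun a => \sum_(b | P b) (mulx a (mulx a (dx b (dx b g))) m +
     mulx b (mulx b (dx a (dx a g))) m) +
     \sum_(b | P b) (((-2%:R * F a - 1) * F b + (4%:R * F a) * (a == b)%:R + (- F a)) * g m))); last first.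
  move=> a Pa; rewrite -big_split /=; apply: eq_bigr => b Pb; rewrite /F.
  case: (a == b); rewrite /= ?mulr1n ?mulr0n ?muln1 ?muln0; ring.
rewrite big_split /=.
under [X in _ + X = _]eq_bigr => a Pa do rewrite -mulr_suml lin3 //.
rewrite -mulr_suml.
set S := \sum_(b | P b) F b.
have hS : (sP P m)%:R = S by rewrite /sP natr_sum.
have hR : R2 P (Lap P g) m = \sum_(a | P a) \sum_(b | P b) mulx a (mulx a (dx b (dx b g))) m.
  by rewrite /R2 /Lap pssumE; apply: eq_bigr => a _; rewrite !mulx_sum pssumE.
rewrite hS hR.
rewrite [X in _ + X * _ = _](_ : _ = (-2%:R * S + 4%:R - #|P|%:R) * S + (- S) * #|P|%:R); last first.
  rewrite (eq_bigr (fun i => (-2%:R * S + 4%:R - #|P|%:R) * F i + (- S))) ?lin2 // => i _; ring.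
under eq_bigr => a _ do rewrite big_split.
rewrite big_split /= [X in _ + X + _ = _]exchange_big /=.
ring.
Qed.


Definition Tab (a b : 'I_n) (g : ps) : ps := mulx a (mulx b g) + dx a (dx b g).

Lemma pairT a b g : a != b -> Tab a b (Tab a b g) =
  mulx a (mulx a (mulx b (mulx b g))) + dx a (dx a (dx b (dx b g)))
  + 2%:R *: mulx a (mulx b (dx a (dx b g))) + mulx a (dx a g) + mulx b (dx b g) + g.
Proof.
move=> ab; rewrite /Tab.
rewrite !(dx_mulx, dxD, dxB, dxN, dxZ, mulxD, mulxB, mulxN, mulxZ) /= !eqxx (eq_sym b a) (negPf ab) /=.
rewrite !(mulx_mulx b a) !(dx_dx b a).
psring.
Qed.

Lemma diag2' a b g : a != b -> mulx a (mulx b (dx a (dx b g))) =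
  fun m => (m a)%:R * (m b)%:R * g m.
Proof. move=> ab; rewrite diag2 (negPf ab); apply: psext => m /=; by rewrite subr0. Qed.

Definition Tsq (P Q : pred 'I_n) (g : ps) : ps :=
  \sum_(a | P a) \sum_(b | Q b) Tab a b (Tab a b g).

Lemma TsqE (P Q : pred 'I_n) g m : (forall i, P i -> Q i -> False) ->
  Tsq P Q g m = R2 P (R2 Q g) m + Lap P (Lap Q g) m +
   (2%:R * (sP P m)%:R * (sP Q m)%:R + #|Q|%:R * (sP P m)%:R + #|P|%:R * (sP Q m)%:R
    + #|P|%:R * #|Q|%:R) * g m.
Proof.
move=> PQ.
rewrite /Tsq pssumE.
under eq_bigr => a Pa do rewrite pssumE.
have ne : forall a b, P a -> Q b -> a != b.
  by move=> a b Pa Qb; apply/eqP => ab; subst; exact: (PQ _ Pa Qb).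
under eq_bigr => a Pa do under eq_bigr => b Qb do
  rewrite pairT ?ne // !(psaddE, pssubE, psscaleE) diag2' ?ne // !mulx_dx_diag /=.
pose F (a : 'I_n) : C := (m a)%:R.
have hSP : (sP P m)%:R = \sum_(b | P b) F b by rewrite /sP natr_sum.
have hSQ : (sP Q m)%:R = \sum_(b | Q b) F b by rewrite /sP natr_sum.
have hR : R2 P (R2 Q g) m = \sum_(a | P a) \sum_(b | Q b) mulx a (mulx a (mulx b (mulx b g))) m.
  by rewrite /R2 pssumE; apply: eq_bigr => a _; rewrite !mulx_sum pssumE.
have hL : Lap P (Lap Q g) m = \sum_(a | P a) \sum_(b | Q b) dx a (dx a (dx b (dx b g))) m.
  by rewrite /Lap pssumE; apply: eq_bigr => a _; rewrite !dx_sum pssumE.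
rewrite hSP hSQ hR hL.
rewrite (eq_bigr (fun a => \sum_(b | Q b) mulx a (mulx a (mulx b (mulx b g))) m +
     \sum_(b | Q b) dx a (dx a (dx b (dx b g))) m +
     \sum_(b | Q b) (((2%:R * F a + 1) * F b + (F a + 1)) * g m))); last first.
  move=> a Pa; rewrite -!big_split /=; apply: eq_bigr => b Qb; rewrite /F; ring.
rewrite !big_split /=.
under [X in _ + X = _]eq_bigr => a Pa do rewrite -mulr_suml lin2.
rewrite -mulr_suml.
set SQ := \sum_(b | Q b) F b.
set SP := \sum_(b | P b) F b.
rewrite [X in _ + X * _ = _](_ : _ = (2%:R * SQ + #|Q|%:R) * SP + (SQ + #|Q|%:R) * #|P|%:R); last first.
  by rewrite (eq_bigr (fun a => (2%:R * SQ + #|Q|%:R) * F a + (SQ + #|Q|%:R))) ?lin2 // => a _; ring.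
ring.
Qed.

End Weyl.


Section PMsec.
Variable C : numClosedFieldType.
Variables p q : nat.
Local Notation n := (p + q)%N.
Local Notation ps := (ps C p q).
Local Notation mono := (mono p q).
Local Notation mulx := (mulx C p q).
Local Notation dx := (dx C p q).
Local Notation Lop := (@Lop C p q).
Local Notation Tab := (@Tab C p q).

Lemma sum_lt_single (F : 'I_n -> 'I_n -> C) (a b : 'I_n) : (a < b)%N ->
  (forall i j : 'I_n, (i < j)%N -> (i != a) || (j != b) -> F i j = 0) ->
  \sum_(i < n) \sum_(j < n | (i < j)%N) F i j = F a b.
Proof.
move=> ab H; rewrite (bigD1 a) //= (bigD1 b) //= big1 ?addr0; last first.
  by move=> j /andP[aj jb]; apply: H => //; rewrite jb orbT.
rewrite big1 ?addr0 // => i ia; apply: big1 => j ij; apply: H; by rewrite // ia.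
Qed.

Lemma phiinvE (a b i j : 'I_n) : phiinv C p q (Mmx C p q a b) i j =
  (dd C p q i)^-1 * (((i == a) && (j == b))%:R - ((i == b) && (j == a))%:R) * dd C p q j.
Proof. by rewrite /phiinv /Mmx !mxE. Qed.

Lemma piX_xx (i j : 'I_n) (g : ps) : (i < p)%N -> (j < p)%N -> piX C p q i j g = mulx i (dx j g) - mulx j (dx i g).
Proof. by move=> hi hj; rewrite /piX hi hj. Qed.
Lemma piX_yy (i j : 'I_n) (g : ps) : (p <= i)%N -> (p <= j)%N -> piX C p q i j g = - (mulx i (dx j g) - mulx j (dx i g)).
Proof.
move=> hi hj; rewrite /piX hi hj ltnNge hi /=; apply: psext => m.
by rewrite !(psoppE, pssubE, psaddE) opprB addrC.
Qed.
Lemma piX_xy (i j : 'I_n) (g : ps) : (i < p)%N -> (p <= j)%N -> piX C p q i j g = (- 'i) *: Tab i j g.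
Proof.
move=> hi hj; rewrite /piX hi ltnNge hj /= (leqNgt p i) hi /=.
by apply: psext => m; rewrite psscaleE /Tab psaddE.
Qed.
Lemma piX_yx (i j : 'I_n) (g : ps) : (p <= i)%N -> (j < p)%N -> piX C p q i j g = 'i *: Tab j i g.
Proof.
move=> hi hj; rewrite /piX ltnNge hi /= (leqNgt p j) hj /=.
by apply: psext => m; rewrite psscaleE /Tab psaddE.
Qed.
Lemma eps_x (i : 'I_n) : (i < p)%N -> eps C p q i = 1. Proof. by rewrite /eps => ->. Qed.
Lemma eps_y (i : 'I_n) : (p <= i)%N -> eps C p q i = -1. Proof. by rewrite /eps ltnNge => ->. Qed.
Lemma dd_x (i : 'I_n) : (i < p)%N -> dd C p q i = 1. Proof. by rewrite /dd => ->. Qed.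
Lemma dd_y (i : 'I_n) : (p <= i)%N -> dd C p q i = 'i. Proof. by rewrite /dd ltnNge => ->. Qed.

Lemma PME (a b : 'I_n) (g : ps) : PM C p q a b g =
  if (a < p)%N == (b < p)%N then Lop a b g
  else if (a < p)%N then - Tab a b g else Tab b a g.
Proof.
apply: psext => m; rewrite /PM /piM.
case: (ltngtP a b) => [ab|ba|ab].
- rewrite (@sum_lt_single (fun i j => eps C p q j * phiinv C p q (Mmx C p q a b) i j * piX C p q i j g m) a b) //; last first.
    move=> i j ij H; rewrite phiinvE.
    have -> : ((i == a) && (j == b)) = false by apply/negbTE; rewrite negb_and.
    have -> : ((i == b) && (j == a)) = false.
      apply/negbTE; rewrite negb_and; case: eqP => //= ib; apply/eqP => ja; subst.
      by move: (ltn_trans ij ab); rewrite ltnn.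
    by rewrite subrr mulr0 mul0r mulr0 mul0r.
  have nab : (a == b) = false by apply/eqP => E; subst; rewrite ltnn in ab.
  rewrite phiinvE !eqxx nab /= subr0.
  have iV : ('i : C)^-1 * 1 * 'i = 1 by rewrite mulr1 mulVf // neq0Ci.
  have ii : forall x : C, 'i * ('i * x) = - x by move=> x; rewrite mulrA mulCii mulN1r.
  case: (ltnP a p) => ha; case: (ltnP b p) => hb /=.
  + by rewrite eps_x // dd_x // dd_x // piX_xx // invr1 !mul1r.
  + rewrite eps_y // dd_x // dd_y // piX_xy // invr1 !mul1r psscaleE psoppE.
    by rewrite mulN1r !mulNr mulrN opprK ii.
  + by move: (leq_ltn_trans ha (ltn_trans ab hb)); rewrite ltnn.
  + rewrite eps_y // dd_y // dd_y // piX_yy // iV psoppE.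
    by rewrite mulr1 mulN1r opprK.
- rewrite (@sum_lt_single (fun i j => eps C p q j * phiinv C p q (Mmx C p q a b) i j * piX C p q i j g m) b a) //; last first.
    move=> i j ij H; rewrite phiinvE.
    have -> : ((i == b) && (j == a)) = false by apply/negbTE; rewrite negb_and.
    have -> : ((i == a) && (j == b)) = false.
      apply/negbTE; rewrite negb_and; case: eqP => //= ia; apply/eqP => jb; subst.
      by move: (ltn_trans ij ba); rewrite ltnn.
    by rewrite subrr mulr0 mul0r mulr0 mul0r.
  have nab : (b == a) = false by apply/eqP => E; subst; rewrite ltnn in ba.
  rewrite phiinvE !eqxx nab /= sub0r.
  have iV : ('i : C)^-1 * -1 * 'i = -1 by rewrite mulrN1 mulNr mulVf // neq0Ci.
  have ii : forall x : C, 'i * ('i * x) = - x by move=> x; rewrite mulrA mulCii mulN1r.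
  case: (ltnP a p) => ha; case: (ltnP b p) => hb /=.
  + rewrite eps_x // dd_x // dd_x // piX_xx // invr1 !mul1r /Lop pssubE pssubE.
    by rewrite mulr1 mulN1r opprB.
  + by move: (leq_ltn_trans hb (ltn_trans ba ha)); rewrite ltnn.
  + rewrite eps_y // dd_x // dd_y // piX_xy // invr1 !mul1r psscaleE.
    by rewrite !mulN1r opprK mulNr mulrN ii opprK.
  + rewrite eps_y // dd_y // dd_y // piX_yy // iV psoppE /Lop !pssubE.
    by rewrite mulN1r opprK mul1r opprB.
- move/val_inj: ab => ab; subst b; rewrite eqxx /Lop subrr ps0E big1 // => i _; apply: big1 => j _.
  by rewrite phiinvE andbC subrr mulr0 mul0r mulr0 mul0r.
Qed.


Lemma TabN a b h : Tab a b (- h) = - Tab a b h.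
Proof. by rewrite /Tab !(mulxN, dxN) opprD. Qed.
Lemma LopN a b h : Lop a b (- h) = - Lop a b h.
Proof. by rewrite /Lop !(mulxN, dxN) opprB opprK addrC. Qed.
Lemma LopC a b h : Lop b a h = - Lop a b h.
Proof. by rewrite /Lop opprB. Qed.

Lemma ltnF (a : nat) : (p <= a)%N -> (a < p)%N = false.
Proof. by rewrite ltnNge => ->. Qed.

Lemma PM_anti (a b : 'I_n) h : PM C p q b a h = - PM C p q a b h.
Proof.
rewrite !PME; case: (ltnP a p) => ha; case: (ltnP b p) => hb;
  rewrite ?(ltnF ha) ?(ltnF hb) ?ha ?hb /= ?opprK //; exact: LopC.
Qed.
Lemma PM_N (a b : 'I_n) h : PM C p q a b (- h) = - PM C p q a b h.
Proof.
rewrite !PME; case: ifP => _; first exact: LopN.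
by case: ifP => _; rewrite TabN.
Qed.

Lemma SqE (a b : 'I_n) g : PM C p q a b (PM C p q a b g) =
  if (a < p)%N == (b < p)%N then Lop a b (Lop a b g)
  else if (a < p)%N then Tab a b (Tab a b g) else Tab b a (Tab b a g).
Proof.
rewrite !PME; case: ((a < p)%N == (b < p)%N) => //.
by case: (a < p)%N; rewrite ?TabN ?opprK.
Qed.

Definition px : pred 'I_n := fun i => (i < p)%N.
Definition py : pred 'I_n := fun i => (p <= i)%N.
Lemma pxy_disj i : px i -> py i -> False.
Proof. by rewrite /px /py => h1 h2; move: (leq_ltn_trans h2 h1); rewrite ltnn. Qed.

Lemma sum_split (F : 'I_n -> C) :
  \sum_(k < n) F k = \sum_(k < n | px k) F k + \sum_(k < n | py k) F k.
Proof.
rewrite (bigID px) /=; congr (_ + _); apply: eq_bigl => k.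
by rewrite /px /py -leqNgt.
Qed.

Lemma card_px : #|px| = p.
Proof.
rewrite -sum1_card.
rewrite (eq_bigl (fun i : 'I_n => (i < p)%N)) //.
rewrite -(big_ord_widen n (fun _ => 1%N)) ?leq_addr //.
by rewrite sum1_card card_ord.
Qed.
Lemma card_py : #|py| = q.
Proof.
have := cardC px; rewrite card_px card_ord => h.
rewrite (eq_card (B := [predC px])); first by apply/eqP; rewrite -(eqn_add2l p) h.
by move=> i; rewrite !inE /px /py -leqNgt.
Qed.

Definition Sq (g : ps) (a b : 'I_n) : C -> C := id.

Lemma XihatE g m : Xihat C p q g m = 2%:R^-1 * (- (Lsq px g m - Lsq py g m)
   + n%:R^-1 * (p%:R - q%:R) * (Lsq px g m + Lsq py g m + 2%:R * Tsq px py g m)).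
Proof.
rewrite /Xihat.
have h1 : forall i k, PM C p q i k (PM C p q k i g) m + PM C p q k i (PM C p q i k g) m
   = - 2%:R * PM C p q i k (PM C p q i k g) m.
  move=> i k; rewrite (PM_anti i k g) PM_N psoppE (PM_anti i k (PM C p q i k g)) psoppE; ring.
have h2 : forall a b, PM C p q a b (PM C p q b a g) m = - PM C p q a b (PM C p q a b g) m.
  by move=> a b; rewrite (PM_anti a b g) PM_N psoppE.
under eq_bigr => i _ do under eq_bigr => k _ do rewrite h1.
have hQ : \sum_(a < n) \sum_(b < n) PM C p q a b (PM C p q b a g) m =
   - \sum_(a < n) \sum_(b < n) PM C p q a b (PM C p q a b g) m.
  rewrite -sumrN; apply: eq_bigr => a _; rewrite -sumrN; apply: eq_bigr => b _; exact: h2.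
rewrite hQ.
set Om := \sum_(a < n) \sum_(b < n) PM C p q a b (PM C p q a b g) m.
have rowP : forall i, px i -> \sum_(k < n) PM C p q i k (PM C p q i k g) m =
    \sum_(k | px k) Lop i k (Lop i k g) m + \sum_(k | py k) Tab i k (Tab i k g) m.
  move=> i Pi; rewrite sum_split; congr (_ + _); apply: eq_bigr => k Pk; rewrite SqE.
    by move: Pi Pk; rewrite /px => -> ->.
  by move: Pi Pk; rewrite /px /py => -> /ltnF -> /=.
have rowQ : forall i, py i -> \sum_(k < n) PM C p q i k (PM C p q i k g) m =
    \sum_(k | px k) Tab k i (Tab k i g) m + \sum_(k | py k) Lop i k (Lop i k g) m.
  move=> i Qi; rewrite sum_split; congr (_ + _); apply: eq_bigr => k Pk; rewrite SqE.
    by move: Qi Pk; rewrite /px /py => /ltnF -> -> /=.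
  by move: Qi Pk; rewrite /px /py => /ltnF -> /ltnF ->.
have hLP : Lsq px g m = \sum_(a | px a) \sum_(k | px k) Lop a k (Lop a k g) m.
  by rewrite /Lsq pssumE; apply: eq_bigr => a _; rewrite pssumE.
have hLQ : Lsq py g m = \sum_(a | py a) \sum_(k | py k) Lop a k (Lop a k g) m.
  by rewrite /Lsq pssumE; apply: eq_bigr => a _; rewrite pssumE.
have hT : Tsq px py g m = \sum_(a | px a) \sum_(k | py k) Tab a k (Tab a k g) m.
  by rewrite /Tsq pssumE; apply: eq_bigr => a _; rewrite pssumE.
have hT' : Tsq px py g m = \sum_(a | py a) \sum_(k | px k) Tab k a (Tab k a g) m.
  by rewrite hT exchange_big.
have hOm : Om = Lsq px g m + Lsq py g m + 2%:R * Tsq px py g m.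
  rewrite /Om sum_split (eq_bigr _ rowP) (eq_bigr _ rowQ) !big_split /=.
  rewrite -hLP -hLQ -hT -hT'; ring.
have hE : \sum_(i < n) eps C p q i = p%:R - q%:R.
  rewrite sum_split (eq_bigr (fun _ => 1)); last by move=> i; exact: eps_x.
  rewrite (eq_bigr (fun _ => -1) (fun i Qi => eps_y Qi)) !sumr_const.
  by rewrite -/(px) card_px card_py mulNrn.
have hS : \sum_(i < n) eps C p q i * \sum_(k < n) PM C p q i k (PM C p q i k g) m =
    Lsq px g m - Lsq py g m.
  rewrite sum_split.
  rewrite (eq_bigr (fun i => \sum_(k | px k) Lop i k (Lop i k g) m + \sum_(k | py k) Tab i k (Tab i k g) m)); last first.
    by move=> i Pi; rewrite eps_x // mul1r rowP.
  rewrite [X in _ + X](eq_bigr (fun i => - (\sum_(k | px k) Tab k i (Tab k i g) m + \sum_(k | py k) Lop i k (Lop i k g) m))); last first.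
    by move=> i Qi; rewrite eps_y // mulN1r rowQ.
  rewrite sumrN !big_split /= -hLP -hLQ -hT -hT'; ring.
rewrite -hOm.
rewrite (eq_bigr (fun i => eps C p q i * (n%:R^-1 * Om) - eps C p q i * \sum_(k < n) PM C p q i k (PM C p q i k g) m)); last first.
  move=> i _; rewrite -mulr_sumr mulrA (_ : 1 / 2 * -2 = -1 :> C); last by field.
  ring.
rewrite sumrB -mulr_suml hE hS; ring.
Qed.

End PMsec.

Section Psmul.
Variable C : numClosedFieldType.
Variables p q : nat.
Local Notation n := (p + q)%N.
Local Notation ps := (ps C p q).
Local Notation mono := (mono p q).
Local Notation mulx := (mulx C p q).
Local Notation dx := (dx C p q).
Local Notation psmul := (psmul C p q).

Definition tom B (K : {ffun 'I_n -> 'I_B.+1}) : mono := fun i => nat_of_ord (K i).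
Definition ofm B (k : mono) : {ffun 'I_n -> 'I_B.+1} := [ffun i => inord (k i)].

Lemma tom_ofm B k : (forall i, (k i <= B)%N) -> tom (ofm B k) = k.
Proof. move=> h; apply: monoext => i; rewrite /tom /ofm ffunE inordK // ltnS; exact: h. Qed.
Lemma ofm_tom B K : ofm B (tom K) = K.
Proof. apply/ffunP => i; rewrite /tom /ofm ffunE inord_val. done. Qed.

Lemma big_bij B B' (P Q : pred mono) (phi psi : mono -> mono) (F G : mono -> C) :
 (forall k, P k -> forall i, (k i <= B)%N) -> (forall k, Q k -> forall i, (k i <= B')%N) ->
 (forall k, P k -> Q (phi k) /\ psi (phi k) = k) ->
 (forall k, Q k -> P (psi k) /\ phi (psi k) = k) ->
 (forall k, P k -> F k = G (phi k)) ->
 \sum_(K : {ffun 'I_n -> 'I_B.+1} | P (tom K)) F (tom K) =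
 \sum_(K : {ffun 'I_n -> 'I_B'.+1} | Q (tom K)) G (tom K).
Proof.
move=> bP bQ PQ QP FG.
rewrite (reindex_onto (fun K' : {ffun 'I_n -> 'I_B'.+1} => ofm B (psi (tom K')))
                      (fun K : {ffun 'I_n -> 'I_B.+1} => ofm B' (phi (tom K)))); last first.
  move=> K PK; have [Qk ek] := PQ _ PK.
  by rewrite tom_ofm ?ek ?ofm_tom //; apply: bQ.
apply: eq_big => K'.
  apply/idP/idP.
    case/andP => PK /eqP <-.
    have [Qk _] := PQ _ PK.
    by rewrite tom_ofm //; apply: bQ.
  move=> QK; have [Pk ek] := QP _ QK.
  rewrite tom_ofm; last exact: bP.
  by rewrite Pk ek ofm_tom eqxx.
case/andP => PK /eqP eK.
rewrite -[in RHS]eK FG //.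
have [Qk _] := PQ _ PK.
by rewrite [tom (ofm B' _)]tom_ofm //; exact: (bQ _ Qk).
Qed.


Definition lem (k m : mono) : bool := [forall i, (k i <= m i)%N].
Definition msub (m k : mono) : mono := fun i => (m i - k i)%N.
Definition Sm (m : mono) : nat := (\sum_(i < n) m i)%N.
Definition SUM (m : mono) (F : mono -> C) : C :=
  \sum_(K : {ffun 'I_n -> 'I_(Sm m).+1} | lem (tom K) m) F (tom K).

Lemma lemP k m : reflect (forall i, (k i <= m i)%N) (lem k m).
Proof. exact: forallP. Qed.

Lemma le_Sm m i : (m i <= Sm m)%N.
Proof. by rewrite /Sm (bigD1 i) //= leq_addr. Qed.

Lemma lem_bound k m : lem k m -> forall i, (k i <= Sm m)%N.
Proof. by move/lemP => h i; apply: leq_trans (h i) (le_Sm m i). Qed.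

Lemma psmulE f g m : psmul f g m = SUM m (fun k => f k * g (msub m k)).
Proof. by []. Qed.

Lemma SUM_bij m m' (phi psi : mono -> mono) (F G : mono -> C) :
 (forall k, lem k m -> lem (phi k) m' /\ psi (phi k) = k) ->
 (forall k, lem k m' -> lem (psi k) m /\ phi (psi k) = k) ->
 (forall k, lem k m -> F k = G (phi k)) -> SUM m F = SUM m' G.
Proof.
move=> h1 h2 h3; apply: (@big_bij (Sm m) (Sm m') (fun k => lem k m) (fun k => lem k m') phi psi F G) => // k hk; exact: lem_bound.
Qed.

Lemma SUM_ext m F G : (forall k, lem k m -> F k = G k) -> SUM m F = SUM m G.
Proof. by move=> h; apply: eq_bigr => K hK; apply: h. Qed.

Lemma SUM_pos i m' F : (forall k, lem k (inc i m') -> k i = 0%N -> F k = 0) ->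
  SUM (inc i m') F = SUM m' (fun k => F (inc i k)).
Proof.
move=> h0; rewrite /SUM (bigID (fun K => (0 < tom K i)%N)) /= [X in _ + X]big1 ?addr0; last first.
  by move=> K /andP[hK]; rewrite lt0n negbK => /eqP; apply: h0.
apply: (@big_bij (Sm (inc i m')) (Sm m') (fun k => lem k (inc i m') && (0 < k i)%N) (fun k => lem k m') (dec i) (inc i) F (fun k => F (inc i k))).
- by move=> k /andP[hk _]; apply: lem_bound.
- by move=> k hk; apply: lem_bound.
- move=> k /andP[/lemP hk pk]; split; last exact: inc_dec.
  apply/lemP => j; case: (eqVneq j i) => [->|ji].
    by rewrite dec_self; move: (hk i) pk; rewrite inc_self; case: (k i).
  by rewrite dec_other //; move: (hk j); rewrite inc_other.
- move=> k /lemP hk; rewrite dec_inc inc_self andbT; split => //.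
  apply/lemP => j; case: (eqVneq j i) => [->|ji]; first by rewrite !inc_self ltnS.
  by rewrite !inc_other.
- by move=> k /andP[_ pk]; rewrite inc_dec.
Qed.

Lemma msubK m k : lem k m -> msub m (msub m k) = k.
Proof. by move/lemP => h; apply: monoext => i; rewrite /msub subKn. Qed.
Lemma lem_msub m k : lem (msub m k) m.
Proof. by apply/lemP => i; rewrite /msub leq_subr. Qed.

Lemma SUM_rev m F : SUM m F = SUM m (fun k => F (msub m k)).
Proof.
apply: (SUM_bij (phi := msub m) (psi := msub m)).
- by move=> k hk; rewrite msubK // lem_msub.
- by move=> k hk; rewrite msubK // lem_msub.
- by move=> k hk; rewrite msubK.
Qed.

Lemma psmulC f g : psmul f g = psmul g f.
Proof.
apply: psext => m; rewrite !psmulE SUM_rev; apply: SUM_ext => k hk.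
by rewrite msubK // mulrC.
Qed.


Lemma msub_inc i m k : msub (inc i m) (inc i k) = msub m k.
Proof.
apply: monoext => j; rewrite /msub; case: (eqVneq j i) => [->|ji].
  by rewrite !inc_self subSS.
by rewrite !inc_other.
Qed.

Lemma mulx_psmul i a b : mulx i (psmul a b) = psmul (mulx i a) b.
Proof.
apply: psext => m; rewrite mulxE !psmulE.
case: (posnP (m i)) => [m0|mpos].
  symmetry; rewrite /SUM big1 // => K /lemP hK; rewrite mulxE.
  have -> : tom K i = 0%N by move: (hK i); rewrite m0 leqn0 => /eqP.
  by rewrite mul0r.
set m' := dec i m.
have E : m = inc i m' by rewrite /m' inc_dec.
rewrite [in RHS]E SUM_pos; last by move=> k _ k0; rewrite mulxE k0 ltnn mul0r.
apply: SUM_ext => k _; by rewrite mulxE inc_self /= dec_inc msub_inc.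
Qed.

Lemma shift_sum i m a b :
  SUM (inc i m) (fun k => (k i)%:R * (a k * b (msub (inc i m) k))) = psmul (dx i a) b m.
Proof.
rewrite SUM_pos; last by move=> k _ ->; rewrite mul0r.
rewrite psmulE; apply: SUM_ext => k _; by rewrite inc_self msub_inc dxE mulrA.
Qed.

Lemma dx_psmul i a b : dx i (psmul a b) = psmul (dx i a) b + psmul a (dx i b).
Proof.
apply: psext => m; rewrite psaddE dxE psmulE.
set M := inc i m.
have split1 : SUM M (fun k => a k * b (msub M k)) * (m i).+1%:R =
   SUM M (fun k => (k i)%:R * (a k * b (msub M k))) +
   SUM M (fun k => (M i - k i)%:R * (a k * b (msub M k))).
  rewrite /SUM mulr_suml -big_split /=; apply: eq_bigr => K /lemP hK.
  rewrite -mulrDl -natrD subnKC; first by rewrite /M inc_self mulrC.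
  exact: hK.
rewrite mulrC split1 shift_sum; congr (_ + _).
rewrite SUM_rev (SUM_ext (G := fun k => (k i)%:R * (b k * a (msub M k)))); last first.
  move=> k /lemP hk; rewrite msubK; last exact/lemP.
  have -> : (M i - msub M k i)%N = k i by rewrite /msub subKn.
  by rewrite [a _ * b _]mulrC.
by rewrite shift_sum psmulC.
Qed.

Lemma psmul0l g : psmul 0 g = 0.
Proof. apply: psext => m; rewrite psmulE ps0E /SUM big1 // => K _; by rewrite ps0E mul0r. Qed.
Lemma psmulDl f1 f2 g : psmul (f1 + f2) g = psmul f1 g + psmul f2 g.
Proof.
apply: psext => m; rewrite psaddE !psmulE /SUM -big_split /=.
by apply: eq_bigr => K _; rewrite psaddE mulrDl.
Qed.
Lemma psmulZl c f g : psmul (c *: f) g = c *: psmul f g.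
Proof.
apply: psext => m; rewrite psscaleE !psmulE /SUM mulr_sumr.
by apply: eq_bigr => K _; rewrite psscaleE mulrA.
Qed.
Lemma psmul_suml (I : Type) (r : seq I) (P : pred I) (F : I -> ps) g :
  psmul (\sum_(t <- r | P t) F t) g = \sum_(t <- r | P t) psmul (F t) g.
Proof.
apply: (big_rec2 (fun x y => psmul x g = y)); first exact: psmul0l.
by move=> t x y _ <-; rewrite psmulDl.
Qed.
Lemma psmul0r g : psmul g 0 = 0. Proof. by rewrite psmulC psmul0l. Qed.
Lemma psmulDr f g1 g2 : psmul f (g1 + g2) = psmul f g1 + psmul f g2.
Proof. by rewrite !(psmulC f) psmulDl. Qed.
Lemma psmulZr c f g : psmul f (c *: g) = c *: psmul f g.
Proof. by rewrite !(psmulC f) psmulZl. Qed.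
Lemma psmul_sumr (I : Type) (r : seq I) (P : pred I) (F : I -> ps) g :
  psmul g (\sum_(t <- r | P t) F t) = \sum_(t <- r | P t) psmul g (F t).
Proof. rewrite psmulC psmul_suml; apply: eq_bigr => t _; exact: psmulC. Qed.
Lemma mulx_psmulr i a b : mulx i (psmul a b) = psmul a (mulx i b).
Proof. by rewrite psmulC mulx_psmul psmulC. Qed.

Lemma psmul1 g : psmul (ps1 C p q) g = g.
Proof.
apply: psext => m; rewrite psmulE /SUM.
pose K0 : {ffun 'I_n -> 'I_(Sm m).+1} := ofm (Sm m) (fun _ => 0%N).
have tK0 : tom K0 = (fun _ => 0%N) by rewrite tom_ofm.
rewrite (bigD1 K0) /=; last by rewrite tK0; apply/lemP.
rewrite big1 ?addr0; last first.
  move=> K /andP[_ KK0]; rewrite /ps1; case: ifP => [/forallP h|]; last by rewrite mul0r.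
  exfalso; move/negP: KK0; apply; apply/eqP; rewrite -(ofm_tom K) /K0.
  by congr ofm; apply: monoext => i; apply/eqP.
rewrite tK0 /ps1 (_ : [forall i, _] = true); last by apply/forallP.
rewrite mul1r; congr g; apply: monoext => i; by rewrite /msub subn0.
Qed.

End Psmul.


Section Kstruct.
Variable C : numClosedFieldType.
Variables p q : nat.
Local Notation n := (p + q)%N.
Local Notation ps := (ps C p q).
Local Notation mono := (mono p q).
Local Notation mulx := (mulx C p q).
Local Notation dx := (dx C p q).
Local Notation psmul := (psmul C p q).
Local Notation Lop := (@Lop C p q).
Local Notation Lsq := (@Lsq C p q).
Local Notation R2 := (@R2 C p q).
Local Notation px := (@px p q).
Local Notation py := (@py p q).
Local Notation Sm := (@Sm p q).

Lemma LopD a b f g : Lop a b (f + g) = Lop a b f + Lop a b g.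
Proof. rewrite /Lop !(dxD, mulxD); psring. Qed.
Lemma LopZ a b c f : Lop a b (c *: f) = c *: Lop a b f.
Proof. rewrite /Lop !(dxZ, mulxZ); psring. Qed.
Lemma Lop0 a b : Lop a b 0 = 0.
Proof. by rewrite /Lop !(dx0, mulx0) subrr. Qed.
Lemma Lop_sum a b (I : Type) (r : seq I) (P : pred I) (F : I -> ps) :
  Lop a b (\sum_(t <- r | P t) F t) = \sum_(t <- r | P t) Lop a b (F t).
Proof.
apply: (big_rec2 (fun x y => Lop a b x = y)); first exact: Lop0.
by move=> t x y _ <-; rewrite LopD.
Qed.

Lemma psmulBl f1 f2 g : psmul (f1 - f2) g = psmul f1 g - psmul f2 g.
Proof. by rewrite psmulDl -scaleN1r psmulZl scaleN1r. Qed.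
Lemma psmulBr f g1 g2 : psmul f (g1 - g2) = psmul f g1 - psmul f g2.
Proof. by rewrite psmulDr -scaleN1r psmulZr scaleN1r. Qed.

Lemma Lop_psmul a b u v : Lop a b (psmul u v) = psmul (Lop a b u) v + psmul u (Lop a b v).
Proof.
rewrite /Lop !dx_psmul !mulxD.
rewrite [mulx a (psmul (dx b u) v)]mulx_psmul [mulx b (psmul (dx a u) v)]mulx_psmul.
rewrite [mulx a (psmul u _)]mulx_psmulr [mulx b (psmul u _)]mulx_psmulr psmulBl psmulBr.
psring.
Qed.

Lemma dx_ps1 i : dx i (ps1 C p q) = 0.
Proof.
apply: psext => m; rewrite dxE ps0E /ps1; case: ifP => [/forallP h|]; last by rewrite mulr0.
by move: (h i); rewrite inc_self.
Qed.

Lemma dx_supp i (h : ps) : (forall m, h m != 0 -> m i = 0%N) -> dx i h = 0.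
Proof.
move=> hs; apply: psext => m; rewrite dxE ps0E.
case: (eqVneq (h (inc i m)) 0) => [->|/hs]; first by rewrite mulr0.
by rewrite inc_self.
Qed.

Lemma Lop_xx a b j h : dx a h = 0 -> dx b h = 0 ->
  Lop a b (mulx j (mulx j h)) = (2 * (b == j))%:R *: mulx a (mulx j h) - (2 * (a == j))%:R *: mulx b (mulx j h).
Proof.
move=> ha hb; rewrite /Lop !(dx_mulx, dxD, dxZ, mulxD, mulxZ) ha hb !mulx0 /=.
case: (b == j); case: (a == j); rewrite /= ?mulr1n ?mulr0n; psring.
Qed.

Lemma Lop_R2 a b (P : pred 'I_n) : (P a = P b) -> Lop a b (R2 P (ps1 C p q)) = 0.
Proof.
move=> hab; rewrite /R2 Lop_sum.
rewrite (eq_bigr (fun j => (2 * (b == j))%:R *: mulx a (mulx j (ps1 C p q)) -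
   (2 * (a == j))%:R *: mulx b (mulx j (ps1 C p q)))); last by move=> j _; rewrite Lop_xx ?dx_ps1.
rewrite sumrB.
case Pa : (P a).
  have Pb : P b by rewrite -hab.
  rewrite (bigD1 b) //= (bigD1 a (P := fun j => P j)) //= !eqxx !big1 ?addr0.
  - by rewrite mulx_mulx subrr.
  - by move=> j /andP[_ ja]; rewrite eq_sym (negPf ja) scale0r.
  - by move=> j /andP[_ jb]; rewrite eq_sym (negPf jb) scale0r.
rewrite !big1 ?subrr // => j Pj.
  have -> : (a == j) = false by apply/negbTE; apply: contraFN Pa => /eqP aj; rewrite aj.
  by rewrite scale0r.
have -> : (b == j) = false by apply/negbTE; apply: contraFN Pa => /eqP bj; rewrite hab bj.
by rewrite scale0r.
Qed.


Lemma rx2E : rx2 C p q = R2 px (ps1 C p q).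
Proof. by apply: psext => m; rewrite /R2 pssumE. Qed.
Lemma ry2E : ry2 C p q = R2 py (ps1 C p q).
Proof. by apply: psext => m; rewrite /R2 pssumE. Qed.

Lemma psmul_R2 (P : pred 'I_n) g : psmul (R2 P (ps1 C p q)) g = R2 P g.
Proof.
rewrite /R2 psmul_suml; apply: eq_bigr => i _.
by rewrite -!mulx_psmul psmul1.
Qed.

Lemma Sm_inc i m : Sm (inc i m) = (Sm m).+1.
Proof.
rewrite /Sm (bigD1 i) //= [in RHS](bigD1 i) //= inc_self addSn; congr (_.+1); congr (_ + _)%N.
by apply: eq_bigr => j ji; rewrite inc_other.
Qed.
Lemma Sm_incdec a b m : (0 < m a)%N -> Sm (inc b (dec a m)) = Sm m.
Proof.
move=> h; rewrite Sm_inc -{2}(inc_dec h) Sm_inc //.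
Qed.

Lemma Lop_rser a b (phi : nat -> nat -> C) (G : nat -> nat -> ps) :
  (forall al be, Lop a b (G al be) = 0) ->
  Lop a b (fun m => \sum_(al < (Sm m).+1) \sum_(be < (Sm m).+1) phi al be * G al be m) = 0.
Proof.
move=> hG; apply: psext => m; rewrite ps0E /Lop pssubE !mulxE !dxE.
have key : forall al be, (if (0 < m a)%N then (dec a m b).+1%:R * G al be (inc b (dec a m)) else 0)
   - (if (0 < m b)%N then (dec b m a).+1%:R * G al be (inc a (dec b m)) else 0) = 0.
  by move=> al be; move: (hG al be) => /(congr1 (fun f => f m)); rewrite ps0E /Lop pssubE !mulxE !dxE.
case: (posnP (m a)) => [ma|ma]; case: (posnP (m b)) => [mb|mb]; rewrite ?subrr //.
- rewrite sub0r Sm_incdec //; apply/eqP; rewrite oppr_eq0 mulr_sumr; apply/eqP.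
  apply: big1 => al _; rewrite mulr_sumr; apply: big1 => be _.
  by move: (key al be); rewrite ma mb /= sub0r => /eqP; rewrite oppr_eq0 mulrCA => /eqP ->; rewrite mulr0.
- rewrite subr0 Sm_incdec // mulr_sumr.
  apply: big1 => al _; rewrite mulr_sumr; apply: big1 => be _.
  by move: (key al be); rewrite ma mb /= subr0 mulrCA => ->; rewrite mulr0.
- rewrite !Sm_incdec // !mulr_sumr -sumrB; apply: big1 => al _.
  rewrite !mulr_sumr -sumrB; apply: big1 => be _.
  by move: (key al be); rewrite ma mb /= !(mulrCA _ (phi al be)) -mulrBr => ->; rewrite mulr0.
Qed.


Lemma Lop_ps1 a b : Lop a b (ps1 C p q) = 0.
Proof. by rewrite /Lop !dx_ps1 !mulx0 subrr. Qed.

Lemma Lop_iter a b (P : pred 'I_n) al : P a = P b ->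
  Lop a b (iter al (psmul (R2 P (ps1 C p q))) (ps1 C p q)) = 0.
Proof.
move=> hab; elim: al => [|al IH] /=; first exact: Lop_ps1.
by rewrite Lop_psmul Lop_R2 // IH psmul0l psmul0r addr0.
Qed.

Lemma pxpy i : py i = ~~ px i.
Proof. by rewrite /py /px -leqNgt. Qed.

Lemma Lop_rser_xy a b (phi : nat -> nat -> C) : px a = px b ->
  Lop a b (rser C p q phi) = 0.
Proof.
move=> hab; apply: (@Lop_rser a b phi (fun al be => psmul (iter al (psmul (rx2 C p q)) (ps1 C p q)) (iter be (psmul (ry2 C p q)) (ps1 C p q)))) => al be.
rewrite rx2E ry2E Lop_psmul !Lop_iter ?psmul0l ?psmul0r ?addr0 //.
by rewrite !pxpy hab.
Qed.

Lemma Lop_supp a b (h : ps) : (forall m, h m != 0 -> m a = 0%N /\ m b = 0%N) -> Lop a b h = 0.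
Proof.
move=> hs; rewrite /Lop !dx_supp ?mulx0 ?subrr // => m /hs []//.
Qed.

Lemma LsqZ P c f : Lsq P (c *: f) = c *: Lsq P f.
Proof.
rewrite /Lsq scaler_sumr; apply: eq_bigr => a _; rewrite scaler_sumr; apply: eq_bigr => b _.
by rewrite !LopZ.
Qed.
Lemma Lsq_sum P (I : Type) (r : seq I) (Q : pred I) (F : I -> ps) :
  Lsq P (\sum_(t <- r | Q t) F t) = \sum_(t <- r | Q t) Lsq P (F t).
Proof.
rewrite /Lsq.
transitivity (\sum_(a | P a) \sum_(t <- r | Q t) \sum_(b | P b) Lop a b (Lop a b (F t))).
  apply: eq_bigr => a _; rewrite -exchange_big; apply: eq_bigr => b _.
  by rewrite !Lop_sum.
by rewrite exchange_big.
Qed.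

Lemma Kcas1 (P : pred 'I_n) u G c : (forall a b, P a -> P b -> Lop a b G = 0) ->
  Lsq P u = c *: u -> Lsq P (psmul u G) = c *: psmul u G.
Proof.
move=> hG hu.
have h1 : forall w a b, P a -> P b -> Lop a b (psmul w G) = psmul (Lop a b w) G.
  by move=> w a b Pa Pb; rewrite Lop_psmul hG // psmul0r addr0.
have h2 : Lsq P (psmul u G) = psmul (Lsq P u) G.
  rewrite /Lsq psmul_suml; apply: eq_bigr => a Pa; rewrite psmul_suml; apply: eq_bigr => b Pb.
  transitivity (Lop a b (psmul (Lop a b u) G)); last exact: h1.
  by congr (Lop a b _); apply: h1.
by rewrite h2 hu psmulZl.
Qed.

Lemma Sm_split (m : mono) : Sm m = (sP px m + sP py m)%N.
Proof.
rewrite /Sm /sP (bigID px) /=; congr (_ + _)%N; apply: eq_bigl => i.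
by rewrite pxpy.
Qed.

Lemma Lap_zero (P : pred 'I_n) h : (fun m => \sum_(i < n | P i) dx i (dx i h) m) = ps0 C p q ->
  Lap P h = 0.
Proof.
move=> H; apply: psext => m; rewrite /Lap pssumE ps0E.
by move/(congr1 (fun f => f m)): H => /= ->.
Qed.

Lemma harmx_Lsq k h : harm_x C p q k h ->
  Lsq px h = (- 2%:R * (k%:R ^+ 2 + (p%:R - 2%:R) * k%:R)) *: h.
Proof.
case=> hs hL; have L0 : Lap px h = 0 by apply: Lap_zero.
apply: psext => m; rewrite LsqE L0 /R2 (eq_bigr (fun _ => 0)); last by move=> i _; rewrite !mulx0.
rewrite big1 // ps0E psscaleE card_px.
case: (eqVneq (h m) 0) => [->|/hs [hy hk]]; first by rewrite !mulr0 subrr.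
have -> : sP px m = k.
  rewrite -hk -/(Sm m) Sm_split (_ : sP py m = 0%N) ?addn0 //.
  by rewrite /sP big1 // => i; apply: hy.
ring.
Qed.

Lemma harmy_Lsq l h : harm_y C p q l h ->
  Lsq py h = (- 2%:R * (l%:R ^+ 2 + (q%:R - 2%:R) * l%:R)) *: h.
Proof.
case=> hs hL; have L0 : Lap py h = 0 by apply: Lap_zero.
apply: psext => m; rewrite LsqE L0 /R2 (eq_bigr (fun _ => 0)); last by move=> i _; rewrite !mulx0.
rewrite big1 // ps0E psscaleE card_py.
case: (eqVneq (h m) 0) => [->|/hs [hx hl]]; first by rewrite !mulr0 subrr.
have -> : sP py m = l.
  rewrite -hl -/(Sm m) Sm_split (_ : sP px m = 0%N) ?add0n //.
  by rewrite /sP big1 // => i; apply: hx.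
ring.
Qed.

Lemma Kelt_Lsq k l F : Kelt C p q k l F ->
  Lsq px F = (- 2%:R * (k%:R ^+ 2 + (p%:R - 2%:R) * k%:R)) *: F /\
  Lsq py F = (- 2%:R * (l%:R ^+ 2 + (q%:R - 2%:R) * l%:R)) *: F.
Proof.
case=> h1 [h2 [phi [hx [hy ->]]]].
have [hs1 _] := hx; have [hs2 _] := hy.
split.
  apply: Kcas1; last exact: harmx_Lsq hx.
  move=> a b Pa Pb; rewrite Lop_psmul Lop_rser_xy; last by rewrite /px in Pa Pb *; rewrite Pa Pb.
  rewrite Lop_supp ?psmul0l ?psmul0r ?addr0 // => m /hs2 [hm _]; split; exact: hm.
rewrite psmulC; apply: Kcas1.
  move=> a b Pa Pb; apply: Lop_supp => m /hs1 [hm _]; split; exact: hm.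
apply: Kcas1; last exact: harmy_Lsq hy.
move=> a b Pa Pb; apply: Lop_rser_xy.
by move: Pa Pb; rewrite !pxpy => /negbTE -> /negbTE ->.
Qed.

End Kstruct.


Section Final.
Variable C : numClosedFieldType.
Variables p q : nat.
Local Notation n := (p + q)%N.
Local Notation ps := (ps C p q).
Local Notation mono := (mono p q).
Local Notation mulx := (mulx C p q).
Local Notation dx := (dx C p q).
Local Notation psmul := (psmul C p q).
Local Notation Lop := (@Lop C p q).
Local Notation Lsq := (@Lsq C p q).
Local Notation Tsq := (@Tsq C p q).
Local Notation R2 := (@R2 C p q).
Local Notation Lap := (@Lap C p q).
Local Notation Eop := (@Eop C p q).
Local Notation px := (@px p q).
Local Notation py := (@py p q).
Local Notation sP := (@sP p q).

Lemma LapE (P : pred 'I_n) g m : Lap P g m = \sum_(i < n | P i) dx i (dx i g) m.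
Proof. by rewrite /Lap pssumE. Qed.

Lemma XplusE g : Xplus C p q g = (- (1 / 2%:R)) *: (Lap px g + R2 py g).
Proof.
apply: psext => m; rewrite psscaleE psaddE LapE -psmul_R2 -ry2E /Xplus /Lapx.
by rewrite mulNr.
Qed.
Lemma XminusE g : Xminus C p q g = (1 / 2%:R) *: (R2 px g + Lap py g).
Proof.
apply: psext => m; rewrite psscaleE psaddE LapE -psmul_R2 -rx2E /Xminus /Lapy.
done.
Qed.
Lemma EopE P g m : Eop P g m = (sP P m)%:R * g m. Proof. by []. Qed.
Lemma HopE g m : Hop C p q g m =
  (- (sP px m)%:R + (sP py m)%:R - p%:R / 2%:R + q%:R / 2%:R) * g m.
Proof.
rewrite /Hop /Ex /Ey.
have -> : \sum_(i < n | (i < p)%N) mulx i (dx i g) m = Eop px g m by rewrite -Eop_sum pssumE.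
have -> : \sum_(i < n | (p <= i)%N) mulx i (dx i g) m = Eop py g m by rewrite -Eop_sum pssumE.
rewrite !EopE; ring.
Qed.

Lemma R2_0 P : R2 P 0 = 0.
Proof. by rewrite /R2 big1 // => i _; rewrite !mulx0. Qed.
Lemma Lap_0 P : Lap P 0 = 0.
Proof. by rewrite /Lap big1 // => i _; rewrite !dx0. Qed.

Lemma XmXp g m : Xminus C p q (Xplus C p q g) m = - (1 / 4%:R) *
  (R2 px (Lap px g) m + R2 py (Lap py g) m + R2 px (R2 py g) m + Lap px (Lap py g) m
   + 4%:R * (sP py m)%:R * g m + 2%:R * q%:R * g m).
Proof.
rewrite XminusE XplusE !R2Z !LapZ !R2D !LapD (Lap_comm py px) LapR2 card_py.
rewrite !(psscaleE, psaddE) EopE.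
rewrite (_ : (2 * q)%:R = 2%:R * q%:R :> C); last by rewrite natrM.
by field.
Qed.

Lemma XpXm g m : Xplus C p q (Xminus C p q g) m = - (1 / 4%:R) *
  (R2 px (Lap px g) m + R2 py (Lap py g) m + R2 px (R2 py g) m + Lap px (Lap py g) m
   + 4%:R * (sP px m)%:R * g m + 2%:R * p%:R * g m).
Proof.
rewrite XminusE XplusE !R2Z !LapZ !R2D !LapD LapR2 card_px (R2_comm py px).
rewrite !(psscaleE, psaddE) EopE.
rewrite (_ : (2 * p)%:R = 2%:R * p%:R :> C); last by rewrite natrM.
by field.
Qed.


Lemma Omega_val g m : Lsq px g m + Lsq py g m + 2%:R * Tsq px py g m =
  2%:R * (R2 px (Lap px g) m + R2 py (Lap py g) m + R2 px (R2 py g) m + Lap px (Lap py g) m)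
  + (- 2%:R * ((sP px m)%:R ^+ 2 + (p%:R - 2%:R) * (sP px m)%:R)
     - 2%:R * ((sP py m)%:R ^+ 2 + (q%:R - 2%:R) * (sP py m)%:R)
     + 2%:R * (2%:R * (sP px m)%:R * (sP py m)%:R + q%:R * (sP px m)%:R + p%:R * (sP py m)%:R
               + p%:R * q%:R)) * g m.
Proof.
rewrite !LsqE (TsqE _ _ (@pxy_disj p q)) card_px card_py; ring.
Qed.

Lemma fm_cancel (x y : C) (fm : C) : fm != 0 -> x * fm = y * fm -> x = y.
Proof. by move=> h /(mulIf h). Qed.

Variables (f : ps) (mm k l : nat) (kp km cx cy : C).
Hypothesis hkp : kp = k%:R + p%:R / 2%:R.
Hypothesis hkm : km = l%:R + q%:R / 2%:R.
Hypothesis hK1 : Lsq px f = (- 2%:R * (k%:R ^+ 2 + (p%:R - 2%:R) * k%:R)) *: f.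
Hypothesis hK2 : Lsq py f = (- 2%:R * (l%:R ^+ 2 + (q%:R - 2%:R) * l%:R)) *: f.
Hypothesis hn : (p + q)%:R != 0 :> C.

Lemma main_plus : Hop C p q f = mm%:R *: f -> Xplus C p q f = 0 ->
  Xihat C p q f = ((kp - km) * (kp + km - 2%:R)
     - (p%:R - q%:R) / (p + q)%:R * (mm%:R * (mm%:R + 2%:R))) *: f.
Proof.
move=> hH hX; apply: psext => m.
have hA : R2 px (Lap px f) m + R2 py (Lap py f) m + R2 px (R2 py f) m + Lap px (Lap py f) m
   = - (4%:R * (sP py m)%:R * f m + 2%:R * q%:R * f m).
  have := XmXp f m; rewrite hX XminusE R2_0 Lap_0 addr0 scaler0 ps0E.
  move/esym/eqP; rewrite mulf_eq0 oppr_eq0 mulf_eq0 oner_eq0 invr_eq0 pnatr_eq0 /= => /eqP h.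
  by apply/eqP; rewrite -subr_eq0 opprK addrA h.
have hH' := congr1 (fun g => g m) hH; rewrite /= HopE psscaleE in hH'.
rewrite XihatE Omega_val hA hK1 hK2 !psscaleE hkp hkm.
case: (eqVneq (f m) 0) => [->|fm0]; first by ring.
have ht : (sP py m)%:R = (sP px m)%:R + mm%:R + (p%:R - q%:R) / 2%:R :> C.
  have := fm_cancel fm0 hH'; move=> e.
  by rewrite -e; field.
rewrite ht; field.
by move: hn; rewrite natrD.
Qed.


Lemma main_minus : Hop C p q f = (- mm%:R) *: f -> Xminus C p q f = 0 ->
  Xihat C p q f = ((kp - km) * (kp + km - 2%:R)
     - (p%:R - q%:R) / (p + q)%:R * (mm%:R * (mm%:R + 2%:R))) *: f.
Proof.
move=> hH hX; apply: psext => m.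
have hA : R2 px (Lap px f) m + R2 py (Lap py f) m + R2 px (R2 py f) m + Lap px (Lap py f) m
   = - (4%:R * (sP px m)%:R * f m + 2%:R * p%:R * f m).
  have := XpXm f m; rewrite hX XplusE R2_0 Lap_0 addr0 scaler0 ps0E.
  move/esym/eqP; rewrite mulf_eq0 oppr_eq0 mulf_eq0 oner_eq0 invr_eq0 pnatr_eq0 /= => /eqP h.
  by apply/eqP; rewrite -subr_eq0 opprK addrA h.
have hH' := congr1 (fun g => g m) hH; rewrite /= HopE psscaleE in hH'.
rewrite XihatE Omega_val hA hK1 hK2 !psscaleE hkp hkm.
case: (eqVneq (f m) 0) => [->|fm0]; first by ring.
have ht : (sP py m)%:R = (sP px m)%:R - mm%:R + (p%:R - q%:R) / 2%:R :> C.
  have := fm_cancel fm0 hH'; move=> e.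
  by rewrite -[X in _ - X + _](opprK (mm%:R : C)) -e; field.
rewrite ht; field.
by move: hn; rewrite natrD.
Qed.

Lemma R2N P g : R2 P (- g) = - R2 P g.
Proof. by rewrite -scaleN1r R2Z scaleN1r. Qed.

Lemma zero_case : (exists c : C, Hop C p q f = c *: f /\ c = 0) ->
  Xplus C p q f = 0 -> Xminus C p q f = 0 ->
  ((kp - km) * (kp + km - 2%:R)) *: f = 0.
Proof.
move=> [c [hH c0]] hXp hXm.
have h2 : (1 / 2%:R : C) != 0 by rewrite mulf_eq0 oner_eq0 invr_eq0 pnatr_eq0.
have e1 : Lap px f = - R2 py f.
  move: hXp; rewrite XplusE => /eqP; rewrite scaler_eq0 oppr_eq0 (negbTE h2) /=.
  by rewrite addr_eq0 => /eqP.
have e2 : Lap py f = - R2 px f.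
  move: hXm; rewrite XminusE => /eqP; rewrite scaler_eq0 (negbTE h2) /=.
  by rewrite addrC addr_eq0 => /eqP.
have eA : R2 px (Lap px f) = R2 py (Lap py f).
  by rewrite e1 e2 !R2N R2_comm.
apply: psext => m; rewrite psscaleE ps0E.
have hH' := congr1 (fun g => g m) hH; rewrite /= HopE psscaleE c0 mul0r in hH'.
have k1 := congr1 (fun g => g m) hK1; rewrite /= LsqE psscaleE in k1.
have k2 := congr1 (fun g => g m) hK2; rewrite /= LsqE psscaleE -eA in k2.
case: (eqVneq (f m) 0) => [->|fm0]; first by rewrite mulr0.
rewrite card_px in k1; rewrite card_py in k2.
have ht : (sP py m)%:R = (sP px m)%:R + (p%:R - q%:R) / 2%:R :> C.
  have e : (- (sP px m)%:R + (sP py m)%:R - p%:R / 2%:R + q%:R / 2%:R) = 0 :> C.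
    by move/eqP: hH'; rewrite mulf_eq0 (negbTE fm0) orbF => /eqP.
  by rewrite -[LHS]subr0 -e; field.
set Sx := ((sP px m)%:R ^+ 2 + (p%:R - 2%:R) * (sP px m)%:R : C).
set Sy := ((sP py m)%:R ^+ 2 + (q%:R - 2%:R) * (sP py m)%:R : C).
set cx' := (- 2%:R * (k%:R ^+ 2 + (p%:R - 2%:R) * k%:R) : C).
set cy' := (- 2%:R * (l%:R ^+ 2 + (q%:R - 2%:R) * l%:R) : C).
have hd : cx' + 2%:R * Sx - (cy' + 2%:R * Sy) = 0.
  apply: (fm_cancel fm0); rewrite mul0r.
  transitivity (cx' * f m + 2%:R * Sx * f m - (cy' * f m + 2%:R * Sy * f m)); first by ring.
  rewrite -k1 -k2 /Sx /Sy; ring.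
rewrite /Sx /Sy /cx' /cy' in hd.
rewrite ht in hd.
suff -> : (kp - km) * (kp + km - 2%:R) = 0 by rewrite mul0r.
rewrite hkp hkm -[RHS](mulr0 (- (1 / 2%:R) : C)) -[in RHS]hd.
by field.
Qed.

End Final.

Unset Implicit Arguments.
Set Strict Implicit.

Theorem corollary3p5 (C : numClosedFieldType) (p q m : nat) (kp km : C)
  (f : ps C p q) :
  (2 <= p)%N -> (2 <= q)%N -> ~~ odd (p + q) -> (m + 3 <= (p + q) %/ 2)%N ->
  (Mplus C p q m f \/ Mminus C p q m f) -> Khom C p q kp km f ->
  Xihat C p q f =
    psscale C p q ((kp - km) * (kp + km - 2)
                   - (p%:R - q%:R) / (p + q)%:R * (m%:R * (m%:R + 2))) f
  /\ (m = 0%N -> Xihat C p q f = ps0 C p q).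
Proof.
move=> hp hq _ _ hM [N [c [F [k [l [hkp [hkm [hF hf]]]]]]]].
have hn : (p + q)%:R != 0 :> C by rewrite pnatr_eq0 -lt0n addn_gt0 (leq_trans _ hp).
have hfps : f = \sum_(t < N) c t *: F t by apply: psext => x; rewrite hf pssumE.
have hK1 : Lsq (@px p q) f = (- 2%:R * (k%:R ^+ 2 + (p%:R - 2%:R) * k%:R)) *: f.
  rewrite hfps Lsq_sum scaler_sumr; apply: eq_bigr => t _.
  by rewrite LsqZ (Kelt_Lsq (hF t)).1 !scalerA mulrC.
have hK2 : Lsq (@py p q) f = (- 2%:R * (l%:R ^+ 2 + (q%:R - 2%:R) * l%:R)) *: f.
  rewrite hfps Lsq_sum scaler_sumr; apply: eq_bigr => t _.
  by rewrite LsqZ (Kelt_Lsq (hF t)).2 !scalerA mulrC.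
have main : Xihat C p q f =
    psscale C p q ((kp - km) * (kp + km - 2)
                   - (p%:R - q%:R) / (p + q)%:R * (m%:R * (m%:R + 2))) f.
  case: hM => [[_ [hH [hX _]]]|[_ [hH [hX _]]]].
    by rewrite psscale_def; apply: main_plus hkp hkm hK1 hK2 hn _ _.
  by rewrite psscale_def; apply: main_minus hkp hkm hK1 hK2 hn _ _.
split => // m0; subst m.
rewrite main psscale_def mulr0n mul0r mulr0 subr0 ps0_def.
have [hXp [hXm hc]] : Xplus C p q f = 0 /\ Xminus C p q f = 0 /\ exists c : C, Hop C p q f = c *: f /\ c = 0.
  case: hM => [[_ [hH [hX hI]]]|[_ [hH [hX hI]]]].
    by split; [exact: hX | split; [exact: hI | exists 0%:R; split]].
  by split; [exact: hI | split; [exact: hX | exists (- 0%:R); split => //; rewrite mulr0n oppr0]].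
exact: zero_case hkp hkm hK1 hK2 hc hXp hXm.
Qed.
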